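(* Let $G=(V,E)$ be a connected graph with at least two vertices that contains neither the claw $K_{1,3}$ nor the path $P_6$ as an induced subgraph. Then for every $v\in V$: $v\in\mathrm{core}(G)$ if and only if $\gamma(G-v)>\gamma(G)$.
   Context: All graphs are finite, simple and undirected. The claw $K_{1,3}$ is the star with one center and three leaves; $P_6$ is the chordless path on six vertices. $\gamma(G)$ is the domination number; a minimum dominating set (mds) is a dominating set of size $\gamma(G)$; $\mathrm{core}(G)$ is the set of vertices belonging to every mds. $G-v$ is $G$ with $v$ deleted. *)

(* Defs.v *)
From mathcomp Require Import all_boot.
Set Implicit Arguments. Unset Strict Implicit. Unset Printing Implicit Defensive.

Definition simple_graph (T : finType) (e : rel T) : Prop :=
  symmetric e /\ irreflexive e.

Definition connected_graph (T : finType) (e : rel T) : Prop :=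
  forall x y : T, connect e x y.

Definition induced_sub (U : finType) (f : rel U) (T : finType) (e : rel T) : Prop :=
  exists phi : U -> T, injective phi /\ forall a b : U, e (phi a) (phi b) = f a b.

Definition claw_rel : rel 'I_4 :=
  fun a b => ((val a == 0) && (val b != 0)) || ((val b == 0) && (val a != 0)).

Definition p6_rel : rel 'I_6 :=
  fun a b => (val a == (val b).+1) || (val b == (val a).+1).

Definition dominates (T : finType) (e : rel T) (W D : {set T}) : bool :=
  (D \subset W) && [forall w in W, (w \in D) || [exists d in D, e w d]].

(* domination number of the graph induced on W: the minimum size of a dominating set.
   The default value #|W| is harmless since W itself always dominates W. *)
Definition dom_num (T : finType) (e : rel T) (W : {set T}) : nat :=
  \big[minn/#|W|]_(D : {set T} | dominates e W D) #|D|.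

Definition gamma (T : finType) (e : rel T) : nat := dom_num e [set: T].

Definition gamma_del (T : finType) (e : rel T) (v : T) : nat := dom_num e [set~ v].

Definition is_mds (T : finType) (e : rel T) (D : {set T}) : bool :=
  dominates e [set: T] D && (#|D| == gamma e).

Definition core (T : finType) (e : rel T) : {set T} :=
  [set v | [forall D : {set T}, is_mds e D ==> (v \in D)]].

(* Main.v *)
Require Import Defs.
From mathcomp Require Import all_boot.
Set Implicit Arguments. Unset Strict Implicit. Unset Printing Implicit Defensive.

Lemma bigmin_le_seq (I : eqType) (r : seq I) (P : pred I) (F : I -> nat) x0 i :
  i \in r -> P i -> \big[minn/x0]_(j <- r | P j) F j <= F i.
Proof.
elim: r => [//|j r IH]; rewrite inE big_cons => /orP[/eqP <-|ir] Pi.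
  by rewrite Pi geq_minl.
case: ifP => _; last exact: IH.
by rewrite (leq_trans (geq_minr _ _)) // IH.
Qed.

Lemma bigmin_attained (I : eqType) (r : seq I) (P : pred I) (F : I -> nat) x0 :
  \big[minn/x0]_(j <- r | P j) F j = x0 \/
  exists2 i, P i & \big[minn/x0]_(j <- r | P j) F j = F i.
Proof.
elim: r => [|j r IH]; first by left; rewrite big_nil.
rewrite big_cons; case: ifP => Pj; last exact: IH.
case: (leqP (F j) (\big[minn/x0]_(j0 <- r | P j0) F j0)) => h.
  by right; exists j.
exact: IH.
Qed.

Lemma dom_num_le (T : finType) (e : rel T) W (D : {set T}) :
  dominates e W D -> dom_num e W <= #|D|.
Proof. by move=> hD; rewrite /dom_num; apply: bigmin_le_seq => //; exact: mem_index_enum. Qed.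

Lemma dom_num_attained (T : finType) (e : rel T) (W : {set T}) :
  exists2 D, dominates e W D & #|D| = dom_num e W.
Proof.
have WW : dominates e W W by rewrite /dominates subxx; apply/forall_inP => w ->.
case: (bigmin_attained (index_enum {set T}) (dominates e W) (fun D => #|D|) #|W|) => [h|[D hD h]].
  by exists W => //; rewrite /dom_num h.
by exists D => //; rewrite /dom_num h.
Qed.

Definition nb (T : finType) (e : rel T) (S : {set T}) z :=
  (z \in S) || [exists s in S, e z s].

Lemma nbS (T : finType) (e : rel T) (S : {set T}) s z : s \in S -> e z s -> nb e S z.
Proof. by move=> sS zs; apply/orP; right; apply/exists_inP; exists s. Qed.

Lemma nbin (T : finType) (e : rel T) (S : {set T}) z : z \in S -> nb e S z.
Proof. by rewrite /nb => ->. Qed.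

Lemma notnb_in (T : finType) (e : rel T) (S : {set T}) z : ~~ nb e S z -> z \notin S.
Proof. by rewrite /nb negb_or => /andP[]. Qed.

Lemma notnb_adj (T : finType) (e : rel T) (S : {set T}) z s : ~~ nb e S z -> s \in S -> ~~ e z s.
Proof. by move=> h sS; apply/negP => zs; move: h; rewrite (nbS sS zs). Qed.

Lemma nbU1 (T : finType) (e : rel T) (S : {set T}) x z :
  nb e (x |: S) z = [|| z == x, e z x | nb e S z].
Proof.
apply/idP/idP.
- case/orP => [/setU1P [->|zS]| /exists_inP [s /setU1P[->|sS] zs]].
  + by rewrite eqxx.
  + by rewrite (nbin e zS) !orbT.
  + by rewrite zs orbT.
  + by rewrite (nbS sS zs) !orbT.
- case/or3P => [/eqP ->|zx|/orP[zS|/exists_inP [s sS zs]]].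
  + by apply: nbin; rewrite setU11.
  + by apply: (nbS (setU11 x S)).
  + by apply: nbin; rewrite setU1r.
  + by apply: (nbS (setU1r x sS)).
Qed.

Lemma notnbU1 (T : finType) (e : rel T) (S : {set T}) x z :
  ~~ nb e (x |: S) z -> [/\ z != x, ~~ e z x & ~~ nb e S z].
Proof. by rewrite nbU1 !negb_or => /and3P[]. Qed.

Lemma nbD1 (T : finType) (e : rel T) (S : {set T}) a z :
  ~~ nb e (S :\ a) z -> nb e S z -> (z == a) || e z a.
Proof.
move=> h /orP[zS|/exists_inP [s sS zs]].
  case: (eqVneq z a) => // za; by move: (notnb_in h); rewrite in_setD1 za zS.
case: (eqVneq s a) => [<-|sa]; first by rewrite zs orbT.
by move: (notnb_adj h (s := s)); rewrite in_setD1 sa sS zs => /(_ isT).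
Qed.

Lemma not_dom_ex (T : finType) (e : rel T) (S : {set T}) :
  ~ (forall z, nb e S z) -> exists z, ~~ nb e S z.
Proof.
move=> H; case: (pickP (fun z => ~~ nb e S z)) => [z hz|h]; first by exists z.
by exfalso; apply: H => z; move: (h z) => /negbFE.
Qed.

Lemma claw_of (T : finType) (e : rel T) : symmetric e -> irreflexive e ->
  ~ induced_sub claw_rel e -> forall c a b d, e c a -> e c b -> e c d ->
  ~~ e a b -> ~~ e a d -> ~~ e b d -> a != b -> a != d -> b != d -> False.
Proof.
move=> sym irr nc c a b d ca cb cd ab ad bd nab nad nbd; apply: nc.
pose phi (i : 'I_4) := match val i with 0 => c | 1 => a | 2 => b | _ => d end.
have ac : e a c by rewrite sym. have bc : e b c by rewrite sym.
have dc : e d c by rewrite sym.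
have ab' := negbTE ab. have ad' := negbTE ad. have bd' := negbTE bd.
have ba' : e b a = false by rewrite sym. have da' : e d a = false by rewrite sym.
have db' : e d b = false by rewrite sym.
have nca : c != a by apply/eqP => h; move: ca; rewrite h irr.
have ncb : c != b by apply/eqP => h; move: cb; rewrite h irr.
have ncd : c != d by apply/eqP => h; move: cd; rewrite h irr.
exists phi; split.
- have q1 := negbTE nca. have q2 := negbTE ncb. have q3 := negbTE ncd.
  have q4 := negbTE nab. have q5 := negbTE nad. have q6 := negbTE nbd.
  have r1 : (a == c) = false by rewrite eq_sym. have r2 : (b == c) = false by rewrite eq_sym.
  have r3 : (d == c) = false by rewrite eq_sym. have r4 : (b == a) = false by rewrite eq_sym.
  have r5 : (d == a) = false by rewrite eq_sym. have r6 : (d == b) = false by rewrite eq_sym.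
  move=> [[|[|[|[|i]]]] Hi] [[|[|[|[|j]]]] Hj] //= H;
  first [ by apply: val_inj | move/eqP: H; rewrite /phi /=;
    by rewrite ?q1 ?q2 ?q3 ?q4 ?q5 ?q6 ?r1 ?r2 ?r3 ?r4 ?r5 ?r6 ].
- move=> [[|[|[|[|i]]]] Hi] [[|[|[|[|j]]]] Hj] //=; rewrite /phi /claw_rel /=;
  by rewrite ?irr ?ca ?cb ?cd ?ac ?bc ?dc ?ab' ?ad' ?bd' ?ba' ?da' ?db'.
Qed.

Lemma p6_rows (i j : 'I_6) : i != j -> exists k, p6_rel i k != p6_rel j k.
Proof.
case: i => [[|[|[|[|[|[|i]]]]]] Hi] //; case: j => [[|[|[|[|[|[|j]]]]]] Hj] //= ij;
first [ by exists (@Ordinal 6 0 isT) | by exists (@Ordinal 6 1 isT)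
      | by exists (@Ordinal 6 2 isT) | by exists (@Ordinal 6 3 isT)
      | by exists (@Ordinal 6 4 isT) | by exists (@Ordinal 6 5 isT)
      | by move: ij; rewrite (bool_irrelevance Hi Hj) eqxx ].
Qed.

Lemma p6_of (T : finType) (e : rel T) : symmetric e -> irreflexive e ->
  ~ induced_sub p6_rel e -> forall p0 p1 p2 p3 p4 p5,
  e p0 p1 -> e p1 p2 -> e p2 p3 -> e p3 p4 -> e p4 p5 ->
  ~~ e p0 p2 -> ~~ e p0 p3 -> ~~ e p0 p4 -> ~~ e p0 p5 -> ~~ e p1 p3 ->
  ~~ e p1 p4 -> ~~ e p1 p5 -> ~~ e p2 p4 -> ~~ e p2 p5 -> ~~ e p3 p5 -> False.
Proof.
move=> sym irr np p0 p1 p2 p3 p4 p5 e01 e12 e23 e34 e45 n02 n03 n04 n05 n13 n14 n15 n24 n25 n35.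
apply: np.
pose phi (i : 'I_6) := nth p0 [:: p0; p1; p2; p3; p4; p5] i.
have e10 : e p1 p0 by rewrite sym. have e21 : e p2 p1 by rewrite sym.
have e32 : e p3 p2 by rewrite sym. have e43 : e p4 p3 by rewrite sym.
have e54 : e p5 p4 by rewrite sym.
have m02 := negbTE n02. have m03 := negbTE n03. have m04 := negbTE n04.
have m05 := negbTE n05. have m13 := negbTE n13. have m14 := negbTE n14.
have m15 := negbTE n15. have m24 := negbTE n24. have m25 := negbTE n25.
have m35 := negbTE n35.
have m20 : e p2 p0 = false by rewrite sym. have m30 : e p3 p0 = false by rewrite sym.
have m40 : e p4 p0 = false by rewrite sym. have m50 : e p5 p0 = false by rewrite sym.
have m31 : e p3 p1 = false by rewrite sym. have m41 : e p4 p1 = false by rewrite sym.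
have m51 : e p5 p1 = false by rewrite sym. have m42 : e p4 p2 = false by rewrite sym.
have m52 : e p5 p2 = false by rewrite sym. have m53 : e p5 p3 = false by rewrite sym.
have Hadj : forall a b, e (phi a) (phi b) = p6_rel a b.
  move=> [[|[|[|[|[|[|i]]]]]] Hi] [[|[|[|[|[|[|j]]]]]] Hj] //=; rewrite /phi /p6_rel /=;
  by rewrite ?irr ?e01 ?e12 ?e23 ?e34 ?e45 ?e10 ?e21 ?e32 ?e43 ?e54
    ?m02 ?m03 ?m04 ?m05 ?m13 ?m14 ?m15 ?m24 ?m25 ?m35
    ?m20 ?m30 ?m40 ?m50 ?m31 ?m41 ?m51 ?m42 ?m52 ?m53.
exists phi; split => //.
move=> i j eq; apply/eqP; apply/negPn/negP => /p6_rows [k].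
by rewrite -!Hadj eq eqxx.
Qed.

Lemma hard_dir (T : finType) (e : rel T) (sym : symmetric e) (irr : irreflexive e)
  (claw : forall c a b d, e c a -> e c b -> e c d ->
     ~~ e a b -> ~~ e a d -> ~~ e b d -> a != b -> a != d -> b != d -> False)
  (p6 : forall p0 p1 p2 p3 p4 p5, e p0 p1 -> e p1 p2 -> e p2 p3 -> e p3 p4 -> e p4 p5 ->
    ~~ e p0 p2 -> ~~ e p0 p3 -> ~~ e p0 p4 -> ~~ e p0 p5 -> ~~ e p1 p3 ->
    ~~ e p1 p4 -> ~~ e p1 p5 -> ~~ e p2 p4 -> ~~ e p2 p5 -> ~~ e p3 p5 -> False)
  (v : T) (k : nat)
  (L : forall S : {set T}, (forall z, nb e S z) -> v \notin S -> #|S| <= k -> False)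
  (u0 : T) (vu0 : e v u0)
  (A : {set T}) (vA : v \notin A) (cardA : #|A| < k)
  (domD : forall z, [|| nb e A z, z == v | e z v])
  (D' : {set T}) (vD' : v \notin D') (cardD' : #|D'| <= k)
  (domD' : forall z, z != v -> nb e D' z) : False.
Proof.
have esym x y : e x y = e y x := sym x y.
have neq_adj x y : e x y -> x != y.
  by move=> h; apply/eqP => xy; move: h; rewrite xy irr.
have neq_in (S : {set T}) x y : x \in S -> y \notin S -> x != y.
  by move=> xS yS; apply/eqP => xy; move: yS; rewrite -xy xS.
have cardU1 (S : {set T}) x : #|x |: S| <= #|S|.+1.
  by rewrite cardsU1; case: (x \in S).
have vnA : forall a, a \in A -> ~~ e v a.
  move=> a0 a0A; apply/negP => va0.
  have [x1 hx1] := not_dom_ex (fun H => L _ H vA (ltnW cardA)).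
  have vnb : nb e A v := nbS a0A va0.
  have x1v : e x1 v.
    move: (domD x1); rewrite (negbTE hx1) /= => /orP[/eqP ex|//].
    by move: hx1; rewrite ex vnb.
  have x1nv : x1 != v := neq_adj _ _ x1v.
  have vS : v \notin x1 |: A by rewrite in_setU1 negb_or eq_sym x1nv.
  have [x2 hx2] := not_dom_ex (fun H => L _ H vS (leq_trans (cardU1 _ _) cardA)).
  have [x21 x21' x2A] := notnbU1 hx2.
  have x2v : e x2 v.
    move: (domD x2); rewrite (negbTE x2A) /= => /orP[/eqP ex|//].
    by move: x2A; rewrite ex vnb.
  apply: (claw v a0 x1 x2) => //; try by rewrite esym.
  - by rewrite esym; apply: (notnb_adj hx1).
  - by rewrite esym; apply: (notnb_adj x2A).
  - exact: neq_in a0A (notnb_in hx1).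
  - exact: neq_in a0A (notnb_in x2A).
  - by rewrite eq_sym.
have P0step : forall u, e u v -> exists y, [/\ e y v, ~~ nb e A y, y != u & ~~ e y u].
  move=> u uv.
  have vS : v \notin u |: A by rewrite in_setU1 negb_or vA andbT eq_sym (neq_adj _ _ uv).
  have [z hz] := not_dom_ex (fun H => L _ H vS (leq_trans (cardU1 _ _) cardA)).
  have [zu zu' zA] := notnbU1 hz.
  exists z; split => //.
  move: (domD z); rewrite (negbTE zA) /= => /orP[/eqP ez|//].
  by move: zu'; rewrite ez esym uv.
have u0v : e u0 v by rewrite esym.
have [x [xv xA _ _]] := P0step u0 u0v.
have [y [yv yA yx yx']] := P0step x xv.
have nDv : forall d, d \in D' -> ~~ e d v.
  move=> d dD; apply/negP => dv; apply: (L D') => // z.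
  case: (eqVneq z v) => [->|zv]; last exact: domD'.
  by apply: (nbS dD); rewrite esym.
have nAv : forall z, z != v -> ~~ e z v -> nb e A z.
  by move=> z zv nzv; move: (domD z); rewrite (negbTE zv) (negbTE nzv) !orbF.
have getd : forall x, e x v -> exists2 d, d \in D' & e x d.
  move=> x' xv'; move: (domD' x' (neq_adj _ _ xv')).
  case/orP => [xD|/exists_inP [d dD xd]]; last by exists d.
  by move: (nDv _ xD); rewrite xv'.
have nDvn : forall d, d \in D' -> d != v.
  by move=> d dD; exact: neq_in dD vD'.
have getA : forall x d, ~~ nb e A x -> d \in D' -> e x d -> exists2 a, a \in A & e d a.
  move=> x' d xA' dD xd.
  move: (nAv d (nDvn d dD) (nDv d dD)); case/orP => [dA|/exists_inP[a aA da]]; last by exists a.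
  by move: xA'; rewrite (nbS dA xd).
have noCommon : forall x y d, ~~ nb e A x -> ~~ nb e A y -> ~~ e x y -> x != y ->
    d \in D' -> e x d -> ~~ e d y.
  move=> x' y' d xA' yA' xy' nxy dD xd; apply/negP => dy.
  have [a aA da] := getA x' d xA' dD xd.
  apply: (claw d x' y' a) => //; first by rewrite esym.
  - exact: notnb_adj xA' aA.
  - exact: notnb_adj yA' aA.
  - by rewrite eq_sym; exact: neq_in aA (notnb_in xA').
  - by rewrite eq_sym; exact: neq_in aA (notnb_in yA').
have [dx dxD xdx] := getd x xv.
have [dy dyD ydy] := getd y yv.
have xy : ~~ e x y by rewrite esym.
have nxy : x != y by rewrite eq_sym.
have ndxy : ~~ e dx y := noCommon x y dx xA yA xy nxy dxD xdx.
have ndyx : ~~ e dy x := noCommon y x dy yA xA yx' yx dyD ydy.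
have xnD : x \notin D' by apply/negP => h; move: (nDv x h); rewrite xv.
have ynD : y \notin D' by apply/negP => h; move: (nDv y h); rewrite yv.
have Wstep : forall x d, e x v -> d \in D' -> e x d -> exists w, [/\ e w d, w != x, ~~ e w x,
    w != v & forall s, s \in D' -> s != d -> ~~ e w s && (w != s)].
  move=> x' d xv' dD xd.
  have vS : v \notin x' |: (D' :\ d).
    rewrite in_setU1 in_setD1 negb_or (negbTE vD') andbF eq_sym (neq_adj _ _ xv'). done.
  have cS : #|x' |: (D' :\ d)| <= k.
    apply: leq_trans (cardU1 _ _) _; by rewrite (cardsD1 d D') dD in cardD'.
  have [w hw] := not_dom_ex (fun H => L _ H vS cS).
  have [wx wx' wD] := notnbU1 hw.
  have wv : w != v by apply/eqP => wv; move: wx'; rewrite wv esym xv'.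
  have Hpriv : forall s, s \in D' -> s != d -> ~~ e w s && (w != s).
    move=> s sD sd; have sS : s \in D' :\ d by rewrite in_setD1 sd sD.
    by rewrite (notnb_adj wD sS) /=; rewrite eq_sym; apply: neq_in sS (notnb_in wD).
  exists w; split => //.
  move: (domD' w wv); case/orP => [wD'|/exists_inP [s sD ws]].
    case: (eqVneq w d) => [wd|wd]; first by move: wx'; rewrite wd esym xd.
    by move: (Hpriv w wD' wd); rewrite eqxx andbF.
  case: (eqVneq s d) => [<-//|sd].
  by move: (Hpriv s sD sd); rewrite ws.
have [w [wdx wx wx' wv wpriv]] := Wstep x dx xv dxD xdx.
have [w' [w'dy w'y w'y' w'v w'priv]] := Wstep y dy yv dyD ydy.
have dxdy : dx != dy by apply/eqP => h; move: ndyx; rewrite -h esym xdx.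
have dydx : dy != dx by rewrite eq_sym.
have /andP[wdy wndy] := wpriv dy dyD dydx.
have /andP[w'dx w'ndx] := w'priv dx dxD dxdy.
have ndxdy : ~~ e dx dy.
  apply/negP => h; apply: (claw dx x w dy) => //; try by rewrite esym.
  - by rewrite eq_sym.
  - by rewrite eq_sym; exact: neq_in dyD xnD.
have ndyv : ~~ e dy v := nDv dy dyD.
have ndxv : ~~ e dx v := nDv dx dxD.
have caseA : forall x y dx dy w, e x v -> e y v -> ~~ e x y -> e x dx -> e y dy ->
    dx \in D' -> dy \in D' -> ~~ e dx y -> ~~ e dy x -> ~~ e dx dy -> e w dx -> ~~ e w x ->
    ~~ e w dy -> w != dy -> w != v -> ~~ e w v -> False.
  move=> x1 y1 dx1 dy1 w1 x1v y1v x1y1 x1d y1d dx1D dy1D n1 n2 n3 w1d w1x w1dy w1ndy w1nv w1v.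
  have ndv := nDv dy1 dy1D. have ndv' := nDv dx1 dx1D.
  have w1y : ~~ e w1 y1.
    apply/negP => h; apply: (claw y1 v w1 dy1) => //; try by rewrite esym.
    - by rewrite eq_sym.
    - by rewrite eq_sym (nDvn _ dy1D).
  apply: (p6 w1 dx1 x1 v y1 dy1) => //; try by rewrite esym.
have wvE : e w v.
  case: (boolP (e w v)) => // h; exfalso.
  exact: (caseA x y dx dy w xv yv xy xdx ydy dxD dyD ndxy ndyx ndxdy wdx wx' wdy wndy wv h).
have w'vE : e w' v.
  case: (boolP (e w' v)) => // h; exfalso.
  by apply: (caseA y x dy dx w' yv xv yx' ydy xdx dyD dxD ndyx ndxy _ w'dy w'y' w'dx w'ndx w'v h);
    rewrite esym.
have wy : e w y.
  apply/negPn/negP => nwy; apply: (claw v x y w) => //; try by rewrite esym.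
  - by rewrite eq_sym.
  - by apply/eqP => h; move: ndxy; rewrite h esym wdx.
have w'x : e w' x.
  apply/negPn/negP => nwx; apply: (claw v y x w') => //; try by rewrite esym.
  - by rewrite eq_sym.
  - by apply/eqP => h; move: ndyx; rewrite h esym w'dy.
have [a aA dxa] := getA x dx xA dxD xdx.
have xa : ~~ e x a := notnb_adj xA aA.
have ya : ~~ e y a := notnb_adj yA aA.
have va : ~~ e v a := vnA a aA.
have xna : x != a by rewrite eq_sym; exact: neq_in aA (notnb_in xA).
have yna : y != a by rewrite eq_sym; exact: neq_in aA (notnb_in yA).
have wna : w != a by apply/eqP => h; move: va; rewrite -h esym wvE.
have w'na : w' != a by apply/eqP => h; move: va; rewrite -h esym w'vE.
have wa : e w a.
  apply/negPn/negP => nwa; apply: (claw dx x w a) => //; try by rewrite esym.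
  by rewrite eq_sym.
have ady : e a dy.
  apply/negPn/negP => nady; apply: (p6 a dx x v y dy) => //; try by rewrite esym.
have w'a : e w' a.
  apply/negPn/negP => nwa; apply: (claw dy y w' a) => //; try by rewrite esym.
  by rewrite eq_sym.
have ww' : w != w' by apply/eqP => h; move: w'dx; rewrite -h wdx.
have cardAa : #|A :\ a|.+2 <= k by move: cardA; rewrite (cardsD1 a A) aA.
case: (boolP (e w w')) => Eww.
-
  have vS : v \notin x |: (w |: (A :\ a)).
    rewrite !in_setU1 in_setD1 (negbTE vA) andbF orbF negb_or.
    by rewrite eq_sym (neq_adj _ _ xv) eq_sym (neq_adj _ _ wvE).
  have cS : #|x |: (w |: (A :\ a))| <= k.
    by apply: leq_trans (cardU1 _ _) _; apply: leq_trans cardAa; rewrite ltnS cardU1.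
  have [z hz] := not_dom_ex (fun H => L _ H vS cS).
  have [zx zx' hz2] := notnbU1 hz.
  have [zw zw' zAa] := notnbU1 hz2.
  have zv : z != v by apply/eqP => h; move: zx'; rewrite h esym xv.
  have nzv : ~~ e z v.
    apply/negP => h; apply: (claw v x w z) => //; try by rewrite esym.
    + by rewrite eq_sym.
    + by rewrite eq_sym.
    + by rewrite eq_sym.
  have za : e z a.
    move: (nbD1 zAa (nAv z zv nzv)); case/orP => [/eqP h|//].
    by move: zw'; rewrite h esym wa.
  have nzdx : ~~ e z dx.
    apply/negP => h; apply: (claw dx x w z) => //; try by rewrite esym.
    + by rewrite eq_sym.
    + by rewrite eq_sym.
    + by rewrite eq_sym.
  have zw'E : e z w'.
    apply/negPn/negP => h; apply: (claw a z w' dx) => //; try by rewrite esym.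
    + by apply/eqP => h'; move: nzv; rewrite h' w'vE.
    + by apply/eqP => h'; move: zx'; rewrite h' esym xdx.
  apply: (claw w' x z w) => //; try by rewrite esym.
  + by rewrite eq_sym.
  + by rewrite eq_sym.
-
  have vS : v \notin w |: (w' |: (A :\ a)).
    rewrite !in_setU1 in_setD1 (negbTE vA) andbF orbF negb_or.
    by rewrite eq_sym (neq_adj _ _ wvE) eq_sym (neq_adj _ _ w'vE).
  have cS : #|w |: (w' |: (A :\ a))| <= k.
    by apply: leq_trans (cardU1 _ _) _; apply: leq_trans cardAa; rewrite ltnS cardU1.
  apply: (L _ _ vS cS) => z; apply/negPn/negP => hz.
  have [zw zw' hz2] := notnbU1 hz.
  have [zw2 zw2' zAa] := notnbU1 hz2.
  have zv : z != v by apply/eqP => h; move: zw'; rewrite h esym wvE.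
  have nzv : ~~ e z v.
    apply/negP => h; apply: (claw v w w' z) => //; try by rewrite esym.
    + by rewrite eq_sym.
    + by rewrite eq_sym.
  move: (nbD1 zAa (nAv z zv nzv)); case/orP => [/eqP h|za].
    by move: zw'; rewrite h esym wa.
  apply: (claw a w w' z) => //; try by rewrite esym.
  + by rewrite eq_sym.
  + by rewrite eq_sym.
Qed.

Theorem proposition4 (T : finType) (e : rel T) :
  simple_graph e ->
  connected_graph e ->
  1 < #|T| ->
  ~ induced_sub claw_rel e ->
  ~ induced_sub p6_rel e ->
  forall v : T, (v \in core e) <-> gamma e < gamma_del e v.
Proof.
move=> [sym irr] conn card nclaw np6 v; split.
- move=> vc; rewrite ltnNge; apply/negP => hle.
  have coreP : forall D, dominates e [set: T] D -> #|D| = gamma e -> v \in D.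
    move: vc; rewrite inE => /forallP H D hD hc.
    by move: (H D); rewrite /is_mds hD hc eqxx.
  have L : forall S : {set T}, (forall z, nb e S z) -> v \notin S -> #|S| <= gamma e -> False.
    move=> S hS vS cS.
    have dS : dominates e [set: T] S by rewrite /dominates subsetT; apply/forall_inP => z _; exact: hS.
    have h : #|S| = gamma e by apply/eqP; rewrite eqn_leq cS dom_num_le.
    by move: (coreP S dS h); rewrite (negbTE vS).
  have [t tv] : exists t, t != v.
    case: (pickP (fun t => t != v)) => [t h|h]; first by exists t.
    exfalso; move: card; rewrite (eq_card (B := pred1 v)) ?card1 // => z.
    by move: (h z); rewrite !inE => /negbFE.
  have [u0 vu0] : exists u, e v u.
    move: (conn v t) => /connectP [[|u p] /= pth lst].
      by move: tv; rewrite lst eqxx.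
    by exists u; case/andP: pth.
  have [D hD cD] := dom_num_attained e [set: T].
  have vD : v \in D := coreP D hD cD.
  have [D' hD' cD'] := dom_num_attained e [set~ v].
  move/andP: hD => [_ /forall_inP hD].
  move/andP: hD' => [sD' /forall_inP hD'].
  apply: (hard_dir sym irr (claw_of sym irr nclaw) (p6_of sym irr np6) (k := gamma e) L vu0
            (A := D :\ v) _ _ _ (D' := D')).
  + by rewrite setD11.
  + by rewrite /gamma -cD (cardsD1 v D) vD.
  + move=> z; move: (hD z (in_setT z)); case/orP => [zD|/exists_inP [s sD zs]].
      case: (eqVneq z v) => [->|zv]; first by rewrite orbT.
      by rewrite (nbin e (z := z) (S := D :\ v)) // in_setD1 zv zD.
    case: (eqVneq s v) => [sv|sv]; first by rewrite -sv zs !orbT.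
    by rewrite (nbS (s := s)) // in_setD1 sv sD.
  + apply/negP => h; move/subsetP: sD' => /(_ v h); by rewrite !inE eqxx.
  + by rewrite cD'.
  + by move=> z zv; apply: hD'; rewrite !inE.
- move=> hlt; rewrite inE; apply/forallP => D; apply/implyP => /andP[hD /eqP cD].
  apply/negPn/negP => vD.
  have : gamma_del e v <= #|D|.
    apply: dom_num_le; move/andP: hD => [_ /forall_inP hD].
    rewrite /dominates; apply/andP; split.
      by apply/subsetP => z zD; rewrite !inE; apply/eqP => zv; move: vD; rewrite -zv zD.
    by apply/forall_inP => z _; apply: hD; rewrite inE.
  by rewrite cD leqNgt hlt.
Qed.
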